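(* Assume $\mathrm{recc}(C)\subseteq\mathrm{recc}(P^B)$ and fix $k\in N_2$. Then $k\notin J$, i.e., $\bar r^k\notin\mathrm{recc}(S_k^C)$.
   Context: Let $A\in\mathbb{R}^{m\times n}$ have full row rank, $b\in\mathbb{R}^m$, and $P=\{x\in\mathbb{R}^n_+:Ax=b\}$. Let $C\subseteq\mathbb{R}^n$ be an open convex set. Fix a basis $B$ of $P$ with nonbasic set $N=\{1,\dots,n\}\setminus B$. Write $P=\{x:x_i=\bar b_i-\sum_{j\in N}\bar a_{ij}x_j\ (i\in B),\ x\ge0\}$ with $\bar b\ge0$. The basic solution $\bar x$ has $\bar x_i=\bar b_i$ ($i\in B$) and $0$ ($i\in N$). $P^B$ is obtained by dropping $x_i\ge0$ for $i\in B$. For $j\in N$, $\bar r^j$ has $\bar r^j_k=-\bar a_{kj}$ ($k\in B$), $\bar r^j_j=1$, and $0$ otherwise. Thus $P^B=\{\bar x+\sum_{j\in N}x_j\bar r^j:x_j\ge0\}$. It is assumed that $\bar x\notin\mathrm{cl}(C)$. For $j\in N$, $\alpha_j=\inf\{\lambda\ge0:\bar x+\lambda\bar r^j\in C\}$ and $\beta_j=\sup\{\lambda\ge0:\bar x+\lambda\bar r^j\in C\}$, with $\alpha_j=+\infty$, $\beta_j=-\infty$ if the halfline misses $C$. Let $N_2=\{j:\alpha_j\in(0,\infty),\beta_j\in(\alpha_j,\infty)\}$. For a set $K$, $\mathrm{recc}(K)=\{d:x+\lambda d\in K\ \forall x\in K,\lambda\ge0\}$. For $k\in N_2$, $S_k^C=\{\bar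 x\}+\mathrm{conv}\big(\bigcup_{j\in N_2}\{\lambda\bar r^j:0\le\lambda<\beta_j\}\big)+\{\lambda\bar r^k:\lambda\le0\}+\mathrm{recc}(C)$, and $J=\{i\in N:\bar r^i\in\mathrm{recc}(S_k^C)\}$. *)

(* Defs.v *)
From HB Require Import structures.
From mathcomp Require Import all_boot all_order all_algebra.
From mathcomp Require Import all_classical all_reals all_analysis.
Set Implicit Arguments. Unset Strict Implicit. Unset Printing Implicit Defensive.
Import Order.TTheory GRing.Theory Num.Theory.
Import numFieldNormedType.Exports.
Local Open Scope classical_set_scope.
Local Open Scope ring_scope.

Section Setting.
Variables (R : realType) (m n : nat).
(* A : constraint matrix, b : right-hand side, Bf : the basis (an ordering of
   the basic indices, B = image of Bf). *)
Variables (A : 'M[R]_(m, n)) (b : 'cV[R]_m) (Bf : 'I_m -> 'I_n).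

Definition AB : 'M[R]_m := colsub Bf A.
(* tableau data: Abar = A_B^{-1} A, bbar = A_B^{-1} b; row k corresponds
   to basic variable Bf k *)
Definition Abar : 'M[R]_(m, n) := invmx AB *m A.
Definition bbar : 'cV[R]_m := invmx AB *m b.

Definition Bset : {set 'I_n} := [set Bf k | k : 'I_m].
Definition Nset : {set 'I_n} := ~: Bset.

Definition xbar : 'rV[R]_n :=
  \row_i (match [pick k | Bf k == i] with Some k => bbar k 0 | None => 0 end).

Definition rbar (j : 'I_n) : 'rV[R]_n :=
  \row_i (match [pick k | Bf k == i] with
          | Some k => - Abar k j
          | None => if i == j then 1 else 0 end).

Definition Ppoly : set 'rV[R]_n :=
  [set x : 'rV[R]_n | (forall i, 0 <= x 0 i) /\ A *m x^T = b].

Definition PB : set 'rV[R]_n :=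
  [set x : 'rV[R]_n | exists lam : 'I_n -> R, (forall j, j \in Nset -> 0 <= lam j) /\
           x = xbar + \sum_(j in Nset) lam j *: rbar j].

End Setting.

Definition recc (R : realType) (n : nat) (K : set 'rV[R]_n) : set 'rV[R]_n :=
  [set d : 'rV[R]_n | forall x, K x -> forall l : R, 0 <= l -> K (x + l *: d)].

Definition is_convex (R : realType) (n : nat) (K : set 'rV[R]_n) : Prop :=
  forall x y (t : R), K x -> K y -> 0 <= t -> t <= 1 -> K ((1 - t) *: x + t *: y).

Definition conv_hull (R : realType) (n : nat) (U : set 'rV[R]_n) : set 'rV[R]_n :=
  [set x : 'rV[R]_n | exists (p : nat) (w : 'I_p -> R) (y : 'I_p -> 'rV[R]_n),
     (forall i, 0 <= w i) /\ \sum_(i < p) w i = 1 /\ (forall i, U (y i)) /\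
     x = \sum_(i < p) w i *: y i].

Section Alphabeta.
Variables (R : realType) (n : nat) (C : set 'rV[R]_n) (x0 : 'rV[R]_n).

(* alpha_j = inf {l >= 0 : x0 + l r in C}, beta = sup; conventions
   inf empty = +oo, sup empty = -oo are those of ereal_inf / ereal_sup *)
Definition alpha (r : 'rV[R]_n) : \bar R :=
  ereal_inf [set l%:E | l in [set l : R | 0 <= l /\ C (x0 + l *: r)]].
Definition beta (r : 'rV[R]_n) : \bar R :=
  ereal_sup [set l%:E | l in [set l : R | 0 <= l /\ C (x0 + l *: r)]].
End Alphabeta.

Section SkC.
Variables (R : realType) (m n : nat) (A : 'M[R]_(m, n)) (b : 'cV[R]_m)
  (Bf : 'I_m -> 'I_n) (C : set 'rV[R]_n).

Local Notation xb := (xbar A b Bf).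
Local Notation rb := (rbar A Bf).

Definition N2 : set 'I_n :=
  [set j | j \in Nset Bf /\
     (0 < alpha C xb (rb j))%E /\ (alpha C xb (rb j) < +oo)%E /\
     (alpha C xb (rb j) < beta C xb (rb j))%E /\ (beta C xb (rb j) < +oo)%E].

Definition SkC (k : 'I_n) : set 'rV[R]_n :=
  [set x : 'rV[R]_n | exists c (l : R) d,
     conv_hull [set y | exists j l', N2 j /\ 0 <= l' /\
                  (l'%:E < beta C xb (rb j))%E /\ y = l' *: rb j] c /\
     l <= 0 /\ recc C d /\
     x = xb + c + l *: rb k + d].

Definition Jset (k : 'I_n) : set 'I_n :=
  [set i | i \in Nset Bf /\ recc (SkC k) (rb i)].
End SkC.

(* Main.v *)
Require Import Defs.
From HB Require Import structures.
From mathcomp Require Import all_boot all_order all_algebra.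
From mathcomp Require Import all_classical all_reals all_analysis.
From mathcomp Require Import lra.
Import Order.TTheory GRing.Theory Num.Theory.
Import numFieldNormedType.Exports.
Local Open Scope classical_set_scope.
Local Open Scope ring_scope.

Lemma rbar_N (R : realType) (m n : nat) (A : 'M[R]_(m, n)) (Bf : 'I_m -> 'I_n)
  (j j' : 'I_n) : j \in Nset Bf -> rbar A Bf j' 0 j = (j == j')%:R.
Proof.
move=> jN; rewrite mxE; case: pickP => [k' /eqP Hk | _].
  by move: jN; rewrite /Nset inE -Hk /Bset imset_f.
by case: eqP.
Qed.

Lemma sum_N (R : realType) (m n : nat) (A : 'M[R]_(m, n)) (Bf : 'I_m -> 'I_n)
  (lam : 'I_n -> R) (j : 'I_n) : j \in Nset Bf ->
  (\sum_(j' in Nset Bf) lam j' *: rbar A Bf j') 0 j = lam j.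
Proof.
move=> jN; rewrite summxE (bigD1 j) //= big1 ?addr0.
  by rewrite mxE rbar_N // eqxx mulr1.
move=> i /andP[_ ij]; rewrite mxE rbar_N // eq_sym (negbTE ij) mulr0 //.
Qed.

Theorem proposition6 (R : realType) (m n : nat) (A : 'M[R]_(m, n))
  (b : 'cV[R]_m) (Bf : 'I_m -> 'I_n) (C : set 'rV[R]_n) (k : 'I_n) :
  \rank A = m ->
  injective Bf ->
  AB A Bf \in unitmx ->
  (forall i, 0 <= bbar A b Bf i 0) ->
  open C -> is_convex C ->
  ~ closure C (xbar A b Bf) ->
  recc C `<=` recc (PB A b Bf) ->
  N2 A b Bf C k ->
  ~ Jset A b Bf C k k /\ ~ recc (SkC A b Bf C k) (rbar A Bf k).
Proof.
move=> _ _ _ _ _ _ _ Hrec HN2.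
suff H: ~ recc (SkC A b Bf C k) (rbar A Bf k) by split => // -[_].
move=> Hr.
have HN2' := HN2.
case: HN2 => kN [a0 [aoo [ab boo]]].
have b0 : (0 < beta C (xbar A b Bf) (rbar A Bf k))%E := lt_trans a0 ab.
have [bb Eb] : exists bb, beta C (xbar A b Bf) (rbar A Bf k) = bb%:E.
  exists (fine (beta C (xbar A b Bf) (rbar A Bf k))); rewrite fineK //.
  by rewrite ge0_fin_numE // ltW.
have bb0 : 0 < bb by rewrite -lte_fin -Eb.
have xS : SkC A b Bf C k (xbar A b Bf).
  exists 0, 0, 0; split.
    exists 1%N, (fun _ => 1), (fun _ => 0); split => //; split.
      by rewrite big_ord1.
    split; last by rewrite big_ord1 scaler0.
    move=> i; exists k, 0; split => //; split => //; split; last by rewrite scale0r.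
    by rewrite Eb lte_fin.
  split => //; split; last by rewrite scale0r !addr0.
  by move=> y Cy l _; rewrite scaler0 addr0.
have := Hr _ xS (bb + 1) ltac:(lra).
case=> c [l [d [[p [w [y [w0 [w1 [yU Ec]]]]]] [l0 [dC E]]]]].
have PBx : PB A b Bf (xbar A b Bf).
  exists (fun _ => 0); split => //; rewrite big1 ?addr0 // => j _; by rewrite scale0r.
have [lam [lam0 Ed]] := Hrec d dC _ PBx 1 ler01.
rewrite scale1r in Ed; move/addrI: Ed => Ed.
have dj : forall j, j \in Nset Bf -> d 0 j = lam j by move=> j jN; rewrite Ed sum_N.
have E' : (bb + 1) *: rbar A Bf k = c + l *: rbar A Bf k + d.
  by apply: (@addrI _ (xbar A b Bf)); rewrite E !addrA.
have Ecoord : forall j, j \in Nset Bf ->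
   (bb + 1) * (j == k)%:R = c 0 j + l * (j == k)%:R + d 0 j.
  move=> j jN; rewrite -!(@rbar_N _ _ _ A Bf j k jN); move: (congr1 (fun M : 'rV[R]_n => M 0 j) E'); rewrite /= !mxE.
  by [].
have cj : forall j, j \in Nset Bf -> c 0 j = \sum_i w i * y i 0 j.
  by move=> j jN; rewrite Ec summxE; apply: eq_bigr => i _; rewrite mxE.
have yj0 : forall i j, j \in Nset Bf -> 0 <= y i 0 j.
  move=> i j jN; have [j' [l' [_ [l'0 [_ Ey]]]]] := yU i; rewrite Ey.
  by rewrite mxE rbar_N // mulr_ge0.
have yk : forall i, y i 0 k <= bb.
  move=> i; have [j' [l' [_ [l'0 [lb Ey]]]]] := yU i; rewrite Ey.
  rewrite mxE rbar_N //; case: eqP => [Hk|_]; last by rewrite mulr0 ltW.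
  rewrite -Hk in lb.
  by rewrite mulr1 -lee_fin -Eb ltW.
have ck : c 0 k <= bb.
  rewrite cj // -[bb]mul1r -w1 mulr_suml; apply: ler_sum => i _.
  by rewrite ler_wpM2l.
have dother : forall j, j \in Nset Bf -> j != k -> d 0 j = 0.
  move=> j jN jk; have := Ecoord j jN; rewrite (negbTE jk) /= !mulr0.
  have c0 : 0 <= c 0 j.
    by rewrite cj //; apply: sumr_ge0 => i _; rewrite mulr_ge0 // yj0.
  have : 0 <= d 0 j by rewrite dj // lam0.
  move=> h1 h2; lra.
have dk : 1 <= d 0 k by have := Ecoord k kN; rewrite eqxx /= !mulr1; lra.
have Ed2 : d = d 0 k *: rbar A Bf k.
  rewrite {1}Ed (bigD1 k) //= big1 ?addr0; first by rewrite -dj.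
  by move=> j /andP[jN jk]; rewrite -dj // dother // scale0r.
have [l1 [l10 Cl1]] : exists l1, 0 <= l1 /\ C (xbar A b Bf + l1 *: rbar A Bf k).
  apply: contrapT => NE; move: aoo; rewrite /alpha.
  suff -> : [set l%:E | l in [set l : R | 0 <= l /\ C (xbar A b Bf + l *: rbar A Bf k)]] = set0.
    by rewrite ereal_inf0.
  by apply/seteqP; split => z // [l' Hl _]; apply: NE; exists l'.
have := dC _ Cl1 (bb + 1) ltac:(lra).
rewrite Ed2 scalerA -addrA -scalerDl => Cz.
have : ((l1 + (bb + 1) * d 0 k)%:E <= beta C (xbar A b Bf) (rbar A Bf k))%E.
  apply: ereal_sup_ubound; exists (l1 + (bb + 1) * d 0 k) => //; split => //.
  by apply: addr_ge0 => //; apply: mulr_ge0; lra.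
rewrite Eb lee_fin => h; clear -h dk l10 bb0; nra.
Qed.
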